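(* Let $(X,d,\preccurlyeq)$ be a preordered $s$-regular $b$-metric space and let $T,S,\tilde T,\tilde S:X\to X$. Suppose there are mappings $H_t,K_t:X\to X$, $0\le t\le n$, such that $$T=H_0\preccurlyeq H_1\succcurlyeq H_2\preccurlyeq\cdots\succcurlyeq H_n=\tilde T,\qquad S=K_0\succcurlyeq K_1\preccurlyeq K_2\succcurlyeq\cdots\preccurlyeq K_n=\tilde S.$$ Suppose the mappings $H_t$, $1\le t\le n$, are isotone, $x_0\in\mathrm{Coin}(T,S)$, and: (i) for each odd $t$, $1\le t\le n$: $K_t$ covers $H_t$ from above, and every chain $C\in\mathcal{C}^*(H_t,K_t,\preccurlyeq)$ has an upper bound $w\in X$ satisfying $w\succcurlyeq H_t(w)$ for which there exists $z\in X$ with $K_t^i(z)\succcurlyeq K_t(w)\succcurlyeq H_t(w)$ for all $i\in\mathbb{N}$ and $d(H_t^i(w),K_t^i(z))\to 0$ as $i\to\infty$; (ii) for each even $t$, $1\le t\le n$: $K_t$ covers $H_t$, and every chain $C\in\mathcal{C}(H_t,K_t,\preccurlyeq)$ has a lower bound $w'\in X$ satisfying $w'\preccurlyeq H_t(w')$ for which there exists $z'\in X$ with $K_t^i(z')\preccurlyeq K_t(w')\preccurlyeq H_t(w')$ for all $i\in\mathbb{N}$ and $d(H_t^i(w'),K_t^i(z'))\to 0$ as $i\to\infty$. Then there exists a fence $x_0\preccurlyeq x_1\succcurlyeq x_2\preccurlyeq\cdots\succcurlyeq x_n$ such that for each odd $t$, $x_t\in\mathrm{Coin}(H_t,K_t)\cap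 O^*_X(x_{t-1})$ and $x_t$ is a maximal element of that set, and for each even $t$, $x_t\in\mathrm{Coin}(H_t,K_t)\cap O_X(x_{t-1})$ and $x_t$ is a minimal element of that set.
   Context: A $b$-metric space with coefficient $s\ge 1$ is a nonempty set $X$ with $d:X\times X\to[0,\infty)$ such that for all $x,y,z$: $d(x,y)=0$ iff $x=y$; $d(x,y)=d(y,x)$; $d(x,y)\le s[d(x,z)+d(z,y)]$. A preorder is a reflexive transitive relation $\preccurlyeq$; $x\succcurlyeq y$ means $y\preccurlyeq x$; $x\prec y$ means $x\preccurlyeq y$ and $x\ne y$. A preordered $s$-regular $b$-metric space $(X,d,\preccurlyeq)$ is a $b$-metric space with coefficient $s$ with a preorder such that $x\preccurlyeq y\preccurlyeq z$ implies $\max\{d(x,y),d(y,z)\}\le s^2d(x,z)$. For maps $F,G$, $F\preccurlyeq G$ means $F(x)\preccurlyeq G(x)$ for all $x$. A chain is a subset any two elements of which are comparable. A map $T$ is isotone if $x\preccurlyeq y$ implies $T(x)\preccurlyeq T(y)$; $T^i$ is the $i$-th iterate. $O_X(x_0)=\{x:x\preccurlyeq x_0\}$, $O^*_X(x_0)=\{x:x\succcurlyeq x_0\}$, $\mathrm{Coin}(T,S)=\{x:T(x)=S(x)\}$. $S$ covers $T$ if for every $x$ with $T(x)\preccurlyeq S(x)$ there is $y\preccurlyeq x$ with $S(y)=T(x)$; $S$ covers $T$ from above if for every $x$ with $T(x)\succcurlyeq S(x)$ there is $y\succcurlyeq x$ with $S(y)=T(x)$. $\mathcal{C}(T,S,\preccurlyeq)$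 is the set of chains $C$ such that for all $x,y\in C$: $T(x)\preccurlyeq S(x)$; $x\prec y$ implies $S(x)\preccurlyeq T(y)$; $S(C)\subset T(X)$. $\mathcal{C}^*(T,S,\preccurlyeq)$ is the set of chains $C$ such that for all $x,y\in C$: $T(x)\succcurlyeq S(x)$; $x\prec y$ implies $T(x)\preccurlyeq S(y)$; $S(C)\subset T(X)$. Upper/lower bounds of $C$ are with respect to $\preccurlyeq$. A minimal (maximal) element of $A$ is $w\in A$ with no $u\in A$ such that $u\prec w$ ($w\prec u$). A fence is a finite sequence with alternating relations as displayed. *)

(* Defs.v *)
From Stdlib Require Import Reals.
Open Scope R_scope.

Section Defs.
Variable X : Type.

Definition is_bmetric (s : R) (d : X -> X -> R) : Prop :=
  1 <= s /\
  (forall x y, 0 <= d x y) /\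
  (forall x y, d x y = 0 <-> x = y) /\
  (forall x y, d x y = d y x) /\
  (forall x y z, d x y <= s * (d x z + d z y)).

Definition is_preorder (le : X -> X -> Prop) : Prop :=
  (forall x, le x x) /\ (forall x y z, le x y -> le y z -> le x z).

Definition slt (le : X -> X -> Prop) (x y : X) : Prop := le x y /\ x <> y.

Definition preord_sreg_bmetric (s : R) (d : X -> X -> R) (le : X -> X -> Prop) : Prop :=
  is_bmetric s d /\ is_preorder le /\
  (forall x y z, le x y -> le y z -> Rmax (d x y) (d y z) <= s ^ 2 * d x z).

Definition map_le (le : X -> X -> Prop) (F G : X -> X) : Prop :=
  forall x, le (F x) (G x).

Definition isotone (le : X -> X -> Prop) (T : X -> X) : Prop :=
  forall x y, le x y -> le (T x) (T y).

Definition Coin (T S : X -> X) (x : X) : Prop := T x = S x.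

Definition O_X (le : X -> X -> Prop) (x0 x : X) : Prop := le x x0.
Definition Ostar_X (le : X -> X -> Prop) (x0 x : X) : Prop := le x0 x.

Definition covers (le : X -> X -> Prop) (T S : X -> X) : Prop :=
  forall x, le (T x) (S x) -> exists y, le y x /\ S y = T x.

Definition covers_above (le : X -> X -> Prop) (T S : X -> X) : Prop :=
  forall x, le (S x) (T x) -> exists y, le x y /\ S y = T x.

Definition is_chain (le : X -> X -> Prop) (C : X -> Prop) : Prop :=
  forall x y, C x -> C y -> le x y \/ le y x.

Definition chainsC (le : X -> X -> Prop) (T S : X -> X) (C : X -> Prop) : Prop :=
  is_chain le C /\
  (forall x, C x -> le (T x) (S x)) /\
  (forall x y, C x -> C y -> slt le x y -> le (S x) (T y)) /\
  (forall x, C x -> exists u, T u = S x).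

Definition chainsCstar (le : X -> X -> Prop) (T S : X -> X) (C : X -> Prop) : Prop :=
  is_chain le C /\
  (forall x, C x -> le (S x) (T x)) /\
  (forall x y, C x -> C y -> slt le x y -> le (T x) (S y)) /\
  (forall x, C x -> exists u, T u = S x).

Definition upper_bound (le : X -> X -> Prop) (C : X -> Prop) (w : X) : Prop :=
  forall x, C x -> le x w.
Definition lower_bound (le : X -> X -> Prop) (C : X -> Prop) (w : X) : Prop :=
  forall x, C x -> le w x.

Definition maximal_in (le : X -> X -> Prop) (A : X -> Prop) (w : X) : Prop :=
  A w /\ ~ (exists u, A u /\ slt le w u).
Definition minimal_in (le : X -> X -> Prop) (A : X -> Prop) (w : X) : Prop :=
  A w /\ ~ (exists u, A u /\ slt le u w).

End Defs.

Arguments is_bmetric {X}.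
Arguments is_preorder {X}.
Arguments slt {X}.
Arguments preord_sreg_bmetric {X}.
Arguments map_le {X}.
Arguments isotone {X}.
Arguments Coin {X}.
Arguments O_X {X}.
Arguments Ostar_X {X}.
Arguments covers {X}.
Arguments covers_above {X}.
Arguments is_chain {X}.
Arguments chainsC {X}.
Arguments chainsCstar {X}.
Arguments upper_bound {X}.
Arguments lower_bound {X}.
Arguments maximal_in {X}.
Arguments minimal_in {X}.

(* Main.v *)
Require Import Defs.
From Stdlib Require Import Reals Lra Lia Classical.
From mathcomp Require classical_sets.
Open Scope R_scope.

Lemma zorn' (T : Type) (P : (T -> Prop) -> Prop) :
  (forall F : (T -> Prop) -> Prop, (forall A, F A -> P A) ->
     (forall A B, F A -> F B -> (forall t, A t -> B t) \/ (forall t, B t -> A t)) ->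
     P (fun a => exists2 A, F A & A a)) ->
  exists A, P A /\ forall B, (forall t, A t -> B t) -> ~ (forall t, B t -> A t) -> ~ P B.
Proof.
  intros H. destruct (@classical_sets.Zorn_bigcup T P H) as [A [PA HA]].
  exists A; split; auto. intros B h1 h2. apply HA. split; auto.
Qed.

Section Core.
Variables (X : Type) (d : X -> X -> R) (s : R) (le : X -> X -> Prop).
Hypothesis Hsp : preord_sreg_bmetric s d le.

Lemma le_refl x : le x x. Proof. destruct Hsp as [_ [[h _] _]]; auto. Qed.
Lemma le_trans x y z : le x y -> le y z -> le x z.
Proof. destruct Hsp as [_ [[_ h] _]]; intros; eapply h; eauto. Qed.
Lemma le_antisym x y : le x y -> le y x -> x = y.
Proof.
  intros h1 h2. destruct Hsp as [[hs [hp [hz [hsym _]]]] [_ hr]].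
  specialize (hr x y x h1 h2). assert (d x x = 0) by (apply hz; auto).
  rewrite H in hr. assert (d x y <= 0).
  { eapply Rle_trans; [apply (Rmax_l _ (d y x))|]. lra. }
  apply hz. specialize (hp x y). lra.
Qed.

Variables (T S : X -> X).
Hypothesis iso : isotone le T.
Hypothesis cov : covers_above le T S.
Hypothesis chainH : forall C, chainsCstar le T S C -> exists w, upper_bound le C w /\ le (T w) w /\
   exists z, (forall i, (1 <= i)%nat -> le (S w) (Nat.iter i S z) /\ le (T w) (S w)) /\
     Un_cv (fun i => d (Nat.iter i T w) (Nat.iter i S z)) 0.

Lemma iter_le w : le (T w) w -> forall n, le (Nat.iter (Datatypes.S n) T w) (T w).
Proof.
  intros hw n; induction n.
  - apply le_refl.
  - change (le (T (Nat.iter (Datatypes.S n) T w)) (T w)). apply iso.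
    eapply le_trans; eauto.
Qed.

Lemma coin_w w z : le (T w) w ->
  (forall i, (1 <= i)%nat -> le (S w) (Nat.iter i S z) /\ le (T w) (S w)) ->
  Un_cv (fun i => d (Nat.iter i T w) (Nat.iter i S z)) 0 -> T w = S w.
Proof.
  intros hw hz hcv.
  destruct Hsp as [[hs [hp [hzero [hsym htri]]]] [_ hr]].
  apply NNPP; intro hne.
  assert (hd : 0 < d (T w) (S w)).
  { destruct (Rle_lt_or_eq_dec 0 _ (hp (T w) (S w))); auto.
    exfalso; apply hne; apply hzero; auto. }
  set (del := d (T w) (S w)) in *.
  assert (hs3 : 0 < 2 * s ^ 3) by (simpl; nra).
  destruct (hcv (del / (2 * s ^ 3))) as [N HN].
  { apply Rdiv_lt_0_compat; lra. }
  set (i := Datatypes.S N).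
  assert (hi : (i >= N)%nat) by (unfold i; lia).
  specialize (HN i hi). unfold R_dist in HN. rewrite Rminus_0_r in HN.
  set (a := d (Nat.iter i T w) (Nat.iter i S z)) in *.
  rewrite Rabs_pos_eq in HN by apply hp.
  destruct (hz i) as [h1 h2]; [unfold i; lia|].
  assert (hTi : le (Nat.iter i T w) (T w)) by apply iter_le, hw.
  assert (hA : d (Nat.iter i T w) (T w) <= s ^ 2 * a).
  { eapply Rle_trans; [apply Rmax_l|]. apply hr; auto. eapply le_trans; eauto. }
  assert (hB : d (Nat.iter i T w) (S w) <= s ^ 2 * a).
  { eapply Rle_trans; [apply Rmax_l|]. apply hr; auto. eapply le_trans; eauto. }
  assert (hC : del <= s * (d (T w) (Nat.iter i T w) + d (Nat.iter i T w) (S w))) by apply htri.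
  rewrite (hsym (T w)) in hC.
  assert (del <= 2 * s ^ 3 * a).
  { eapply Rle_trans; [apply hC|]. simpl in *. nra. }
  assert (2 * s ^ 3 * a < del).
  { apply Rmult_lt_compat_l with (r := 2 * s ^ 3) in HN; auto.
    replace (2 * s ^ 3 * (del / (2 * s ^ 3))) with del in HN by (field; lra). lra. }
  lra.
Qed.

Lemma core x : le (S x) (T x) ->
  exists w, le x w /\ maximal_in le (fun y => Coin T S y /\ Ostar_X le x y) w.
Proof.
  intros hx. destruct (cov x hx) as [x1 [hxx1 hSx1]].
  assert (hx1 : le (S x1) (T x1)) by (rewrite hSx1; apply iso; auto).
  set (P := fun C : X -> Prop => chainsCstar le T S (fun y => y = x1 \/ C y)).
  destruct (zorn' X P) as [A [PA HA]].
  - intros F FP Ftot.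
    assert (pair : forall y1 y2, (y1 = x1 \/ exists2 A, F A & A y1) ->
              (y2 = x1 \/ exists2 A, F A & A y2) ->
              exists C, P C /\ (y1 = x1 \/ C y1) /\ (y2 = x1 \/ C y2)).
    { intros y1 y2 [e1|[A1 F1 a1]] [e2|[A2 F2 a2]].
      - exists (fun _ => False). split; [|tauto].
        unfold P. split; [|split; [|split]].
        + intros a b [->|[]] [->|[]]; left; apply le_refl.
        + intros a [->|[]]; auto.
        + intros a b [->|[]] [->|[]] [_ hn]; tauto.
        + intros a [->|[]]; eauto.
      - exists A2; auto.
      - exists A1; auto.
      - destruct (Ftot A1 A2 F1 F2) as [h|h]; [exists A2|exists A1]; auto. }
    split; [|split; [|split]].
    + intros a b ha hb. destruct (pair a b ha hb) as [C [[hc _] [h1 h2]]].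
      apply hc; auto.
    + intros a ha. destruct (pair a a ha ha) as [C [[_ [hc _]] [h1 _]]]. auto.
    + intros a b ha hb. destruct (pair a b ha hb) as [C [[_ [_ [hc _]]] [h1 h2]]]. auto.
    + intros a ha. destruct (pair a a ha ha) as [C [[_ [_ [_ hc]]] [h1 _]]]. auto.
  - destruct (chainH _ PA) as [w [hub [hw [z [hz hcv]]]]].
    pose proof (coin_w w z hw hz hcv) as hcoin.
    assert (hxw : le x w) by (eapply le_trans; [apply hxx1|apply hub; auto]).
    exists w. split; auto. split; [split; [exact hcoin|exact hxw]|].
    intros [u [[hcu hxu] [hwu hne]]].
    assert (huA : ~ A u).
    { intro h. apply hne. apply le_antisym; auto. }
    apply (HA (fun y => y = u \/ A y)).
    + auto.
    + intro h. apply huA. apply h. left; reflexivity.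
    + destruct PA as [pc [pS [pslt pim]]].
      assert (hcw : forall c, (c = x1 \/ A c) -> le c w) by (intros; apply hub; auto).
      split; [|split; [|split]].
      * intros a b [->|[->|ha]] [->|[->|hb]]; try (left; apply le_refl);
          try (left; eapply le_trans; [apply hcw|]; eauto; fail);
          try (right; eapply le_trans; [apply hcw|]; eauto; fail);
          apply pc; auto.
      * intros a [->|[->|ha]]; [auto| |auto]. unfold Coin in hcu. rewrite hcu; apply le_refl.
      * intros a b [->|[->|ha]] [->|[->|hb]] [hab hn];
          try (exfalso; apply hn; reflexivity);
          try (exfalso; apply hn; apply le_antisym; [exact hab|]; eapply le_trans; [apply hcw|]; eauto; fail);
          try (unfold Coin in hcu; rewrite <- hcu; apply iso; exact hab);
          try (apply pslt; auto; split; auto; fail).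
      * intros a [->|[->|ha]]; [|exists u; exact hcu|]; apply pim; auto.
Qed.
End Core.

Lemma dual_sp X d s le : @preord_sreg_bmetric X s d le -> preord_sreg_bmetric s d (fun a b => le b a).
Proof.
  intros [hb [[hr ht] hreg]]. split; [exact hb|split; [split; [exact hr|]|]].
  - intros x y z h1 h2; eapply ht; eauto.
  - intros x y z h1 h2. destruct hb as [_ [_ [_ [hsym _]]]].
    rewrite (hsym x z), (hsym x y), (hsym y z), Rmax_comm. apply hreg; auto.
Qed.

Lemma core_dual X d s le (Hsp : @preord_sreg_bmetric X s d le) T S
  (iso : isotone le T) (cov : covers le T S)
  (chainH : forall C, chainsC le T S C -> exists w, lower_bound le C w /\ le w (T w) /\
   exists z, (forall i, (1 <= i)%nat -> le (Nat.iter i S z) (S w) /\ le (S w) (T w)) /\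
     Un_cv (fun i => d (Nat.iter i T w) (Nat.iter i S z)) 0)
  x : le (T x) (S x) ->
  exists w, le w x /\ minimal_in le (fun y => Coin T S y /\ O_X le x y) w.
Proof.
  intros hx.
  assert (iso' : isotone (fun a b => le b a) T) by (intros a b h; apply iso; auto).
  assert (cov' : covers_above (fun a b => le b a) T S).
  { intros a h. destruct (cov a h) as [y [h1 h2]]. eauto. }
  assert (ch' : forall C, chainsCstar (fun a b => le b a) T S C -> exists w, upper_bound (fun a b => le b a) C w /\ (fun a b => le b a) (T w) w /\
   exists z, (forall i, (1 <= i)%nat -> (fun a b => le b a) (S w) (Nat.iter i S z) /\ (fun a b => le b a) (T w) (S w)) /\
     Un_cv (fun i => d (Nat.iter i T w) (Nat.iter i S z)) 0).
  { intros C [c1 [c2 [c3 c4]]].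
    destruct (chainH C) as [w [h1 [h2 h3]]].
    + split; [|split; [|split]]; auto.
      * intros a b ha hb; destruct (c1 a b ha hb); auto.
      * intros a b ha hb [hab hn]. apply (c3 b a hb ha). split; auto.
    + exists w; split; auto. }
  destruct (core X d s (fun a b => le b a) (dual_sp X d s le Hsp) T S iso' cov' ch' x hx)
    as [w [hw [[hc hne] hmax]]].
  - exists w. split; auto. split; [split; auto|].
    intros [u [hu [hu1 hu2]]]. apply hmax. exists u. split; auto. split; auto.
Qed.

Theorem theorem2p4
  (X : Type) (d : X -> X -> R) (s : R) (le : X -> X -> Prop)
  (Hsp : preord_sreg_bmetric s d le)
  (T S Tt St : X -> X) (n : nat) (H K : nat -> X -> X)
  (HH0 : H 0%nat = T) (HHn : H n = Tt) (HK0 : K 0%nat = S) (HKn : K n = St)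
  (* the fences  T = H_0 <= H_1 >= H_2 <= ... H_n,  S = K_0 >= K_1 <= K_2 >= ... K_n *)
  (Hfence_H : forall t : nat, (1 <= t <= n)%nat ->
     (Nat.odd t = true -> map_le le (H (t - 1)%nat) (H t)) /\
     (Nat.odd t = false -> map_le le (H t) (H (t - 1)%nat)))
  (Hfence_K : forall t : nat, (1 <= t <= n)%nat ->
     (Nat.odd t = true -> map_le le (K t) (K (t - 1)%nat)) /\
     (Nat.odd t = false -> map_le le (K (t - 1)%nat) (K t)))
  (Hiso : forall t : nat, (1 <= t <= n)%nat -> isotone le (H t))
  (x0 : X) (Hx0 : Coin T S x0)
  (Hodd : forall t : nat, (1 <= t <= n)%nat -> Nat.odd t = true ->
     covers_above le (H t) (K t) /\
     forall C : X -> Prop, chainsCstar le (H t) (K t) C ->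
       exists w : X, upper_bound le C w /\ le (H t w) w /\
         exists z : X,
           (forall i : nat, (1 <= i)%nat ->
              le (K t w) (Nat.iter i (K t) z) /\ le (H t w) (K t w)) /\
           Un_cv (fun i => d (Nat.iter i (H t) w) (Nat.iter i (K t) z)) 0)
  (Heven : forall t : nat, (1 <= t <= n)%nat -> Nat.odd t = false ->
     covers le (H t) (K t) /\
     forall C : X -> Prop, chainsC le (H t) (K t) C ->
       exists w' : X, lower_bound le C w' /\ le w' (H t w') /\
         exists z' : X,
           (forall i : nat, (1 <= i)%nat ->
              le (Nat.iter i (K t) z') (K t w') /\ le (K t w') (H t w')) /\
           Un_cv (fun i => d (Nat.iter i (H t) w') (Nat.iter i (K t) z')) 0) :
  exists x : nat -> X,
    x 0%nat = x0 /\
    forall t : nat, (1 <= t <= n)%nat ->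
      (Nat.odd t = true ->
         le (x (t - 1)%nat) (x t) /\
         maximal_in le (fun y => Coin (H t) (K t) y /\ Ostar_X le (x (t - 1)%nat) y) (x t)) /\
      (Nat.odd t = false ->
         le (x t) (x (t - 1)%nat) /\
         minimal_in le (fun y => Coin (H t) (K t) y /\ O_X le (x (t - 1)%nat) y) (x t)).
Proof.
  assert (le_refl0 : forall a, le a a) by (intros; eapply le_refl; eauto).
  assert (step : forall t y, (1 <= t <= n)%nat -> Coin (H (t-1)%nat) (K (t-1)%nat) y ->
    exists y', (Nat.odd t = true -> le y y' /\
         maximal_in le (fun v => Coin (H t) (K t) v /\ Ostar_X le y v) y') /\
      (Nat.odd t = false -> le y' y /\
         minimal_in le (fun v => Coin (H t) (K t) v /\ O_X le y v) y') /\
      Coin (H t) (K t) y').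
  { intros t y ht hy.
    destruct (Hfence_H t ht) as [fh1 fh2]. destruct (Hfence_K t ht) as [fk1 fk2].
    destruct (Nat.odd t) eqn:E.
    - destruct (Hodd t ht E) as [hc hch].
      destruct (core X d s le Hsp (H t) (K t) (Hiso t ht) hc hch y) as [w [h1 h2]].
      + apply (le_trans X d s le Hsp _ (K (t-1)%nat y)); [apply fk1; auto|].
        unfold Coin in hy. rewrite <- hy. apply fh1; auto.
      + exists w. split; [auto|split; [discriminate|]]. destruct h2 as [[h _] _]; exact h.
    - destruct (Heven t ht E) as [hc hch].
      destruct (core_dual X d s le Hsp (H t) (K t) (Hiso t ht) hc hch y) as [w [h1 h2]].
      + apply (le_trans X d s le Hsp _ (H (t-1)%nat y)); [apply fh2; auto|].
        unfold Coin in hy. rewrite hy. apply fk2; auto.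
      + exists w. split; [discriminate|split; [auto|]]. destruct h2 as [[h _] _]; exact h. }
  assert (main : forall m, (m <= n)%nat -> exists x : nat -> X, x 0%nat = x0 /\
     Coin (H m) (K m) (x m) /\
     forall t : nat, (1 <= t <= m)%nat ->
      (Nat.odd t = true ->
         le (x (t - 1)%nat) (x t) /\
         maximal_in le (fun y => Coin (H t) (K t) y /\ Ostar_X le (x (t - 1)%nat) y) (x t)) /\
      (Nat.odd t = false ->
         le (x t) (x (t - 1)%nat) /\
         minimal_in le (fun y => Coin (H t) (K t) y /\ O_X le (x (t - 1)%nat) y) (x t))).
  { induction m as [|m IH]; intros hm.
    - exists (fun _ => x0). split; [reflexivity|split].
      + rewrite HH0, HK0; exact Hx0.
      + intros t ht; lia.
    - destruct (IH ltac:(lia)) as [x [hx0 [hxc hx]]].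
      destruct (step (Datatypes.S m) (x m)) as [y' [h1 [h2 h3]]].
      + lia.
      + replace (Datatypes.S m - 1)%nat with m by lia. exact hxc.
      + exists (fun k => if Nat.eqb k (Datatypes.S m) then y' else x k).
        split; [simpl; exact hx0|split].
        * rewrite Nat.eqb_refl. exact h3.
        * intros t ht.
          destruct (Nat.eq_dec t (Datatypes.S m)) as [->|hne].
          -- rewrite Nat.eqb_refl.
             replace (Datatypes.S m - 1)%nat with m by lia.
             assert (Nat.eqb m (Datatypes.S m) = false) as -> by (apply Nat.eqb_neq; lia).
             split; auto.
          -- assert (Nat.eqb t (Datatypes.S m) = false) as -> by (apply Nat.eqb_neq; auto).
             assert (Nat.eqb (t-1) (Datatypes.S m) = false) as -> by (apply Nat.eqb_neq; lia).
             apply hx; lia. }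
  destruct (main n (le_n n)) as [x [hx0 [_ hx]]]. exists x; split; auto.
Qed.
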